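(* There exists an infinite set $A\subseteq \mathbb{R}^{2}$ with the following two properties: (1) for every positive integer $n$ and every subset $P\subseteq A$ consisting of $n$ points, there exists a subset $P'\subseteq P$ with $|P'|\ge n/2$ such that no three points of $P'$ are collinear; (2) there is no partition $A = A_1\cup\cdots\cup A_m$ of $A$ into finitely many sets such that, for each $i$, no three points of $A_i$ are collinear. *)

(* Defs.v *)
From Stdlib Require Import Reals List.
Import ListNotations.
Open Scope R_scope.

Definition point := (R * R)%type.

Definition collinear (p q r : point) : Prop :=
  (fst q - fst p) * (snd r - snd p) - (snd q - snd p) * (fst r - fst p) = 0.

Definition no_three_collinear (S : point -> Prop) : Prop :=
  forall p q r, S p -> S q -> S r -> p <> q -> q <> r -> p <> r ->
    ~ collinear p q r.

Definition infinite_set (S : point -> Prop) : Prop :=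
  forall l : list point, exists x, S x /\ ~ In x l.

(* Main.v *)
Require Import Defs.
From Stdlib Require Import Reals List Lia Lra Psatz Arith Classical.
Open Scope R_scope.
Definition ex (S1 Q1 S2 Q2 S3 Q3 : R) := (S2-S1)*(Q3-Q1) - (Q2-Q1)*(S3-S1).

Lemma prod_bd x y X Y : -X <= x <= X -> -Y <= y <= Y -> -(X*Y) <= x*y <= X*Y.
Proof. intros [] []. split; nra. Qed.

Lemma rmax_bd u v F : 20*u*u <= F -> 20*v*v <= F -> 20 * Rmax u v * Rmax u v <= F.
Proof. intros; unfold Rmax; destruct (Rle_dec u v); auto. Qed.

Lemma case1 a b c d e F : 1<=a -> 1<=b -> 1<=c -> 1<=d -> 1<=e ->
  20*a*a<=F -> 20*b*b<=F -> 20*c*c<=F -> 20*d*d<=F -> 20*e*e<=F ->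
  (1 <= c+d-a-b \/ c+d-a-b <= -1) ->
  ex (a+b) (a*a+a*b+b*b) (c+d) (c*c+c*d+d*d) (e+F) (e*e+e*F+F*F) <> 0.
Proof.
  intros ha hb hc hd he Fa Fb Fc Fd Fe hD.
  set (M := Rmax (Rmax (Rmax a b) (Rmax c d)) e).
  assert (FM : 20*M*M <= F) by (unfold M; repeat apply rmax_bd; auto).
  assert (aM : a <= M) by (unfold M; repeat (apply Rmax_l || apply Rmax_r || eapply Rle_trans; try apply Rmax_l)).
  assert (bM : b <= M) by (unfold M; eapply Rle_trans; [|apply Rmax_l]; eapply Rle_trans; [|apply Rmax_l]; apply Rmax_r).
  assert (cM : c <= M) by (unfold M; eapply Rle_trans; [|apply Rmax_l]; eapply Rle_trans; [|apply Rmax_r]; apply Rmax_l).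
  assert (dM : d <= M) by (unfold M; eapply Rle_trans; [|apply Rmax_l]; eapply Rle_trans; [|apply Rmax_r]; apply Rmax_r).
  assert (eM : e <= M) by (unfold M; apply Rmax_r).
  clearbody M.
  set (D := c+d-a-b) in *.
  set (E := (c*c+c*d+d*d) - (a*a+a*b+b*b)).
  assert (H1 : ex (a+b) (a*a+a*b+b*b) (c+d) (c*c+c*d+d*d) (e+F) (e*e+e*F+F*F)
     = D*F*F + (F*(D*e - E) + D*(e*e - (a*a+a*b+b*b)) - E*(e - (a+b)))).
  { unfold ex, D, E; ring. }
  rewrite H1.
  assert (hDb : -(2*M) <= D <= 2*M) by (unfold D; lra).
  assert (P1 : forall u v, 1 <= u -> u <= M -> 1 <= v -> v <= M -> 0 <= u*v <= M*M).
  { intros u v Hu1 Hu2 Hv1 Hv2; split; nra. }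
  pose proof (P1 a a ha aM ha aM). pose proof (P1 a b ha aM hb bM). pose proof (P1 b b hb bM hb bM).
  pose proof (P1 c c hc cM hc cM). pose proof (P1 c d hc cM hd dM). pose proof (P1 d d hd dM hd dM).
  pose proof (P1 e e he eM he eM).
  assert (hEb : -(3*(M*M)) <= E <= 3*(M*M)) by (unfold E; lra).
  assert (heb : -M <= e <= M) by lra.
  pose proof (prod_bd _ _ _ _ hDb heb) as hDe.
  assert (h1 : -(5*(M*M)) <= D*e - E <= 5*(M*M)) by lra.
  assert (hF : -F <= F <= F) by lra.
  pose proof (prod_bd _ _ _ _ hF h1) as h2.
  assert (h3b : -(3*(M*M)) <= e*e - (a*a+a*b+b*b) <= 3*(M*M)) by lra.
  pose proof (prod_bd _ _ _ _ hDb h3b) as h3.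
  assert (h4b : -(2*M) <= e - (a+b) <= 2*M) by lra.
  pose proof (prod_bd _ _ _ _ hEb h4b) as h4.
  assert (M1 : 1 <= M) by lra.
  assert (B1 : F*(5*(M*M)) <= F*F/4) by nra.
  assert (B2a : 400*(M*M)*(M*M) <= F*F) by (assert (0 <= 20*M*M) by nra; nra).
  assert (B2b : M*M*M <= (M*M)*(M*M)) by nra.
  assert (B2 : 2*M*(3*(M*M)) + 3*(M*M)*(2*M) <= F*F/20).
  { replace (2*M*(3*(M*M)) + 3*(M*M)*(2*M)) with (12*(M*M*M)) by ring. lra. }
  assert (0 < F*F) by nra. intro Hc.
  destruct hD as [hD|hD].
  - assert (0 <= (D-1)*(F*F)) by (apply Rmult_le_pos; nra).
    assert (F*F <= D*F*F) by (replace (D*F*F) with ((D-1)*(F*F) + F*F) by ring; lra). lra.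
  - assert (0 <= (-1-D)*(F*F)) by (apply Rmult_le_pos; nra).
    assert (D*F*F <= -(F*F)) by (replace (D*F*F) with (-((-1-D)*(F*F)) - F*F) by ring; lra). lra.
Qed.

Lemma case2 a b d e F : 1<=a -> 1<=b -> 1<=d -> 1<=e ->
  20*a*a<=F -> 20*b*b<=F -> 20*d*d<=F -> 20*e*e<=F -> e <> d ->
  (1 <= d+e-a-b \/ d+e-a-b <= -1) ->
  ex (a+b) (a*a+a*b+b*b) (d+F) (d*d+d*F+F*F) (e+F) (e*e+e*F+F*F) <> 0.
Proof.
  intros ha hb hd he Fa Fb Fd Fe hed hK.
  replace (ex (a+b) (a*a+a*b+b*b) (d+F) (d*d+d*F+F*F) (e+F) (e*e+e*F+F*F))
    with ((e - d) * (F*(d+e-a-b) + (d*e - (a+b)*(d+e) + (a*a+a*b+b*b)))) by (unfold ex; ring).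
  apply Rmult_integral_contrapositive_currified; [lra|].
  set (M := Rmax (Rmax a b) (Rmax d e)).
  assert (FM : 20*M*M <= F) by (unfold M; repeat apply rmax_bd; auto).
  assert (aM : a <= M) by (unfold M; eapply Rle_trans; [|apply Rmax_l]; apply Rmax_l).
  assert (bM : b <= M) by (unfold M; eapply Rle_trans; [|apply Rmax_l]; apply Rmax_r).
  assert (dM : d <= M) by (unfold M; eapply Rle_trans; [|apply Rmax_r]; apply Rmax_l).
  assert (eM : e <= M) by (unfold M; eapply Rle_trans; [|apply Rmax_r]; apply Rmax_r).
  clearbody M.
  assert (P1 : forall u v, 1 <= u -> u <= M -> 1 <= v -> v <= M -> 0 <= u*v <= M*M).
  { intros u v Hu1 Hu2 Hv1 Hv2; split; nra. }
  pose proof (P1 a a ha aM ha aM). pose proof (P1 a b ha aM hb bM). pose proof (P1 b b hb bM hb bM).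
  pose proof (P1 d e hd dM he eM).
  pose proof (P1 a d ha aM hd dM). pose proof (P1 a e ha aM he eM).
  pose proof (P1 b d hb bM hd dM). pose proof (P1 b e hb bM he eM).
  assert (1 <= a*a) by nra.
  replace ((a+b)*(d+e)) with (a*d+a*e+b*d+b*e) by ring.
  intro Hc.
  destruct hK as [hK|hK].
  - assert (F <= F*(d+e-a-b)) by (replace (F*(d+e-a-b)) with (F*(d+e-a-b-1) + F) by ring;
      assert (0 <= F*(d+e-a-b-1)) by (apply Rmult_le_pos; lra); lra).
    lra.
  - assert (F*(d+e-a-b) <= -F) by (replace (F*(d+e-a-b)) with (-(F*(-1-(d+e-a-b))) - F) by ring;
      assert (0 <= F*(-1-(d+e-a-b))) by (apply Rmult_le_pos; lra); lra).
    lra.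
Qed.

Lemma case3 a b c F : a <> b -> a <> c -> b <> c ->
  ex (a+F) (a*a+a*F+F*F) (b+F) (b*b+b*F+F*F) (c+F) (c*c+c*F+F*F) <> 0.
Proof.
  intros. replace (ex (a+F) (a*a+a*F+F*F) (b+F) (b*b+b*F+F*F) (c+F) (c*c+c*F+F*F))
    with ((b-a)*(c-a)*(c-b)) by (unfold ex; ring).
  repeat apply Rmult_integral_contrapositive_currified; lra.
Qed.

Fixpoint xs (n:nat) : nat := match n with 0%nat => 1%nat | S m => (20 * xs m * xs m)%nat end.
Definition xr n := INR (xs n).
Definition pt (i j : nat) : point := (xr i + xr j, xr i*xr i + xr i*xr j + xr j*xr j).

Lemma xr_S n : xr (S n) = 20 * xr n * xr n.
Proof. unfold xr. change (xs (S n)) with (20 * xs n * xs n)%nat. rewrite !mult_INR.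
  replace (INR 20) with 20 by (simpl; ring). ring. Qed.

Lemma xr_ge1 n : 1 <= xr n.
Proof. induction n. unfold xr; simpl; lra. rewrite xr_S; nra. Qed.

Lemma growth i j : (i < j)%nat -> 20 * xr i * xr i <= xr j.
Proof.
  induction j; intros H; [lia|].
  destruct (Nat.eq_dec i j) as [->|]. rewrite xr_S; lra.
  assert (H1 : 20 * xr i * xr i <= xr j) by (apply IHj; lia).
  rewrite xr_S. pose proof (xr_ge1 j). nra.
Qed.

Lemma mono i j : (i < j)%nat -> xr i < xr j.
Proof. intros H. pose proof (growth i j H). pose proof (xr_ge1 i). nra. Qed.

Lemma xr_inj i j : xr i = xr j -> i = j.
Proof. intros H. destruct (lt_eq_lt_dec i j) as [[h|h]|h]; auto.
  pose proof (mono _ _ h); lra. pose proof (mono _ _ h); lra. Qed.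

Lemma sum_inj a b c d : (a < b)%nat -> (c < d)%nat -> xr a + xr b = xr c + xr d -> a = c /\ b = d.
Proof.
  intros hab hcd H.
  destruct (lt_eq_lt_dec b d) as [[h|h]|h].
  - pose proof (growth b d h). pose proof (mono a b hab). pose proof (xr_ge1 b). pose proof (xr_ge1 c).
    assert (20 * xr b <= 20 * xr b * xr b) by nra. lra.
  - subst. split; auto. apply xr_inj. lra.
  - pose proof (growth d b h). pose proof (mono c d hcd). pose proof (xr_ge1 d). pose proof (xr_ge1 a).
    assert (20 * xr d <= 20 * xr d * xr d) by nra. lra.
Qed.

Lemma sum_inj2 a b c d : (a < b)%nat -> c <> d -> xr a + xr b = xr c + xr d ->
  (a = c /\ b = d) \/ (a = d /\ b = c).
Proof.
  intros hab hcd H. destruct (lt_eq_lt_dec c d) as [[h|h]|h]; [|lia|].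
  - left. apply sum_inj; auto.
  - right. destruct (sum_inj a b d c hab h) as [-> ->]; [lra|]. auto.
Qed.

Lemma int_sep m n : m <> n -> 1 <= INR m - INR n \/ INR m - INR n <= -1.
Proof.
  intros H. destruct (lt_eq_lt_dec m n) as [[h|h]|h]; [right|lia|left].
  - apply le_INR in h. rewrite S_INR in h. lra.
  - apply le_INR in h. rewrite S_INR in h. lra.
Qed.

Lemma Dsep a b c d : xr c + xr d <> xr a + xr b ->
  1 <= xr c + xr d - xr a - xr b \/ xr c + xr d - xr a - xr b <= -1.
Proof.
  intros H. replace (xr c + xr d - xr a - xr b) with (INR (xs c + xs d) - INR (xs a + xs b))
    by (unfold xr; rewrite !plus_INR; ring).
  apply int_sep. intro E. apply H. unfold xr. rewrite <- !plus_INR, E. reflexivity.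
Qed.

Definition cut (side : nat -> bool) a b := side a <> side b.

Lemma coll_pt a b c d e f : collinear (pt a b) (pt c d) (pt e f) <->
  ex (xr a + xr b) (xr a*xr a + xr a*xr b + xr b*xr b) (xr c + xr d) (xr c*xr c + xr c*xr d + xr d*xr d)
     (xr e + xr f) (xr e*xr e + xr e*xr f + xr f*xr f) = 0.
Proof. unfold collinear, ex, pt; simpl; tauto. Qed.

Lemma swap12 p q r : collinear p q r -> collinear q p r.
Proof. destruct p, q, r; unfold collinear; simpl; intros; nra. Qed.
Lemma swap23 p q r : collinear p q r -> collinear p r q.
Proof. destruct p, q, r; unfold collinear; simpl; intros; nra. Qed.

Lemma core2 side a1 b1 a2 a3 f : (a1 < b1)%nat -> (b1 < f)%nat -> (a2 < f)%nat -> (a3 < f)%nat ->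
  a2 <> a3 -> cut side a1 b1 -> cut side a2 f -> cut side a3 f ->
  ~ collinear (pt a1 b1) (pt a2 f) (pt a3 f).
Proof.
  intros h1 h2 h3 h4 h23 c1 c2 c3. rewrite coll_pt.
  assert (a1 < f)%nat by lia.
  apply case2; try apply xr_ge1; try (apply growth; lia).
  - intro E. apply xr_inj in E. auto.
  - apply Dsep. intro E. symmetry in E. destruct (sum_inj2 a1 b1 a2 a3 h1 h23 E) as [[-> ->]|[-> ->]];
    unfold cut in *; destruct (side a2), (side a3), (side f); congruence.
Qed.

Lemma core side a1 b1 a2 b2 a3 b3 : (a1<b1)%nat -> (a2<b2)%nat -> (a3<b3)%nat ->
  (a1,b1)<>(a2,b2) -> (a1,b1)<>(a3,b3) -> (a2,b2)<>(a3,b3) ->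
  cut side a1 b1 -> cut side a2 b2 -> cut side a3 b3 -> (b1<=b3)%nat -> (b2<=b3)%nat ->
  ~ collinear (pt a1 b1) (pt a2 b2) (pt a3 b3).
Proof.
  intros h1 h2 h3 d12 d13 d23 c1 c2 c3 l1 l2.
  destruct (Nat.eq_dec b1 b3) as [e1|n1]; destruct (Nat.eq_dec b2 b3) as [e2|n2].
  - subst. rewrite coll_pt. apply case3; intro E; apply xr_inj in E; subst; auto.
  - subst. intro H. apply swap12 in H.
    refine (core2 side a2 b2 a1 a3 b3 _ _ _ _ _ _ _ _ H); auto; try lia;
    intro; subst; auto.
  - subst. intro H. refine (core2 side a1 b1 a2 a3 b3 _ _ _ _ _ _ _ _ H); auto; try lia; intro; subst; auto.
  - rewrite coll_pt. apply case1; try apply xr_ge1; try (apply growth; lia).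
    apply Dsep. intro E. symmetry in E. destruct (sum_inj _ _ _ _ h1 h2 E); subst; auto.
Qed.

Lemma noncoll side a1 b1 a2 b2 a3 b3 : (a1<b1)%nat -> (a2<b2)%nat -> (a3<b3)%nat ->
  (a1,b1)<>(a2,b2) -> (a1,b1)<>(a3,b3) -> (a2,b2)<>(a3,b3) ->
  cut side a1 b1 -> cut side a2 b2 -> cut side a3 b3 ->
  ~ collinear (pt a1 b1) (pt a2 b2) (pt a3 b3).
Proof.
  intros h1 h2 h3 d12 d13 d23 c1 c2 c3 H.
  destruct (le_lt_dec b1 b3); destruct (le_lt_dec b2 b3).
  - exact (core side a1 b1 a2 b2 a3 b3 h1 h2 h3 d12 d13 d23 c1 c2 c3 l l0 H).
  - apply swap23 in H. refine (core side a1 b1 a3 b3 a2 b2 _ _ _ _ _ _ _ _ _ _ _ H); auto; try lia; congruence.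
  - apply swap23, swap12, swap23 in H. refine (core side a3 b3 a2 b2 a1 b1 _ _ _ _ _ _ _ _ _ _ _ H); auto; try lia; congruence.
  - destruct (le_lt_dec b2 b1).
    + apply swap23, swap12, swap23 in H. refine (core side a3 b3 a2 b2 a1 b1 _ _ _ _ _ _ _ _ _ _ _ H); auto; try lia; congruence.
    + apply swap23 in H. refine (core side a1 b1 a3 b3 a2 b2 _ _ _ _ _ _ _ _ _ _ _ H); auto; try lia; congruence.
Qed.

Lemma tri_coll i j k : collinear (pt i j) (pt j k) (pt i k).
Proof. unfold collinear, pt; simpl; ring. Qed.

Definition cutb (side: nat->bool) (e : nat*nat) := negb (Bool.eqb (side (fst e)) (side (snd e))).

Lemma split_len {X} (g h : X -> bool) l : length (filter g l) =
  (length (filter g (filter h l)) + length (filter g (filter (fun x => negb (h x)) l)))%nat.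
Proof. induction l; simpl; auto. destruct (h a); simpl; destruct (g a); simpl; lia. Qed.

Lemma maxcut N : forall E, (forall e, In e E -> (fst e < snd e < N)%nat) ->
  exists side, (length E <= 2 * length (filter (cutb side) E))%nat.
Proof.
  induction N; intros E HE.
  - destruct E as [|e E]. exists (fun _ => true); simpl; lia.
    destruct (HE e (or_introl eq_refl)); lia.
  - set (E1 := filter (fun e => snd e <? N) E).
    set (E2 := filter (fun e => negb (snd e <? N)) E).
    destruct (IHN E1) as [s0 Hs0].
    { intros e He; unfold E1 in He; apply filter_In in He as [He1 He2];
      apply Nat.ltb_lt in He2; specialize (HE e He1); lia. }
    set (t := length (filter (fun e => s0 (fst e)) E2)).
    set (u := length (filter (fun e => negb (s0 (fst e))) E2)).
    assert (Htu : (t + u = length E2)%nat) by apply filter_length.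
    assert (HL : length E = (length E1 + length E2)%nat).
    { unfold E1, E2. symmetry. apply filter_length. }
    destruct (Nat.leb t u) eqn:Hb.
    + exists (fun k => if k =? N then true else s0 k).
      rewrite (split_len _ (fun e => snd e <? N) E). fold E1 E2.
      rewrite (filter_ext_in _ (cutb s0) E1).
      2: { intros e He. unfold E1 in He; apply filter_In in He as [He1 He2];
           apply Nat.ltb_lt in He2; specialize (HE e He1). unfold cutb.
           assert (H1 : fst e <> N) by lia. assert (H2 : snd e <> N) by lia.
           apply Nat.eqb_neq in H1, H2. rewrite H1, H2. reflexivity. }
      rewrite (filter_ext_in _ (fun e => negb (s0 (fst e))) E2).
      2: { intros e He. unfold E2 in He; apply filter_In in He as [He1 He2].
           apply Bool.negb_true_iff, Nat.ltb_ge in He2. specialize (HE e He1). unfold cutb.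
           assert (H1 : fst e <> N) by lia. assert (H2 : snd e = N) by lia.
           apply Nat.eqb_neq in H1. rewrite H1, H2, Nat.eqb_refl.
           destruct (s0 (fst e)); reflexivity. }
      fold u. apply Nat.leb_le in Hb. lia.
    + exists (fun k => if k =? N then false else s0 k).
      rewrite (split_len _ (fun e => snd e <? N) E). fold E1 E2.
      rewrite (filter_ext_in _ (cutb s0) E1).
      2: { intros e He. unfold E1 in He; apply filter_In in He as [He1 He2];
           apply Nat.ltb_lt in He2; specialize (HE e He1). unfold cutb.
           assert (H1 : fst e <> N) by lia. assert (H2 : snd e <> N) by lia.
           apply Nat.eqb_neq in H1, H2. rewrite H1, H2. reflexivity. }
      rewrite (filter_ext_in _ (fun e => s0 (fst e)) E2).
      2: { intros e He. unfold E2 in He; apply filter_In in He as [He1 He2].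
           apply Bool.negb_true_iff, Nat.ltb_ge in He2. specialize (HE e He1). unfold cutb.
           assert (H1 : fst e <> N) by lia. assert (H2 : snd e = N) by lia.
           apply Nat.eqb_neq in H1. rewrite H1, H2, Nat.eqb_refl.
           destruct (s0 (fst e)); reflexivity. }
      fold t. apply Nat.leb_gt in Hb. lia.
Qed.

Lemma pigeon (F : list nat) : forall (P : nat -> Prop) (g : nat -> nat),
  (forall n, exists u, (n <= u)%nat /\ P u) -> (forall u, P u -> In (g u) F) ->
  exists c, In c F /\ forall n, exists u, (n <= u)%nat /\ P u /\ g u = c.
Proof.
  induction F as [|c F IH]; intros P g Hinf Hg.
  - destruct (Hinf 0%nat) as [u [_ Hu]]. destruct (Hg u Hu).
  - destruct (classic (forall n, exists u, (n <= u)%nat /\ P u /\ g u = c)) as [Hc|Hc].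
    + exists c; split; [left|]; auto.
    + apply not_all_ex_not in Hc as [n0 Hn0].
      destruct (IH (fun u => P u /\ (n0 <= u)%nat) g) as [c' [Hc'1 Hc'2]].
      * intros n. destruct (Hinf (max n n0)) as [u [Hu1 Hu2]]. exists u; split; [lia|split; [auto|lia]].
      * intros u [Hu1 Hu2]. destruct (Hg u Hu1) as [E|E]; auto.
        exfalso; apply Hn0; exists u; auto.
      * exists c'. split; [right; auto|]. intros n. destruct (Hc'2 n) as [u [? [[? ?] ?]]].
        exists u; auto.
Qed.

Lemma ramsey (col : nat -> nat -> nat) n : forall F, (length F <= n)%nat ->
  forall Sv : nat -> Prop, (forall k, exists u, (k <= u)%nat /\ Sv u) ->
  (forall u w, Sv u -> Sv w -> (u < w)%nat -> In (col u w) F) ->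
  exists i j k, (i < j)%nat /\ (j < k)%nat /\ col i j = col j k /\ col i j = col i k.
Proof.
  induction n as [|n IH]; intros F HF Sv Hinf Hc.
  - destruct F; simpl in HF; [|lia].
    destruct (Hinf 0%nat) as [u [_ Hu]]. destruct (Hinf (Datatypes.S u)) as [w [Hw1 Hw2]].
    destruct (Hc u w Hu Hw2); lia.
  - destruct (Hinf 0%nat) as [v [_ Hv]].
    destruct (pigeon F (fun u => Sv u /\ (v < u)%nat) (col v)) as [c [HcF Hcinf]].
    { intros k. destruct (Hinf (max k (Datatypes.S v))) as [u [Hu1 Hu2]]. exists u; split; [lia|split; [auto|lia]]. }
    { intros u [Hu1 Hu2]. apply Hc; auto. }
    destruct (classic (exists u w, (Sv u /\ (v<u)%nat /\ col v u = c) /\ (Sv w /\ (v < w)%nat /\ col v w = c)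
       /\ (u < w)%nat /\ col u w = c)) as [Ht|Ht].
    + destruct Ht as [u [w [[? [? ?]] [[? [? ?]] [? ?]]]]].
      exists v, u, w. repeat split; auto; congruence.
    + apply (IH (remove Nat.eq_dec c F)) with (Sv := fun u => Sv u /\ (v<u)%nat /\ col v u = c).
      * pose proof (remove_length_lt Nat.eq_dec F c HcF). lia.
      * intros k. destruct (Hcinf k) as [u [? [[? ?] ?]]]. exists u; auto.
      * intros u w Hu Hw Huw. apply in_in_remove.
        -- intro E. apply Ht. exists u, w. auto.
        -- apply Hc; tauto.
Qed.

Lemma pt_inj a b c d : (a<b)%nat -> (c<d)%nat -> pt a b = pt c d -> a = c /\ b = d.
Proof. intros h1 h2 H. apply (f_equal fst) in H. simpl in H. apply sum_inj; auto. Qed.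

Lemma nodup_map_inj (g : nat -> point) : (forall m n, g m = g n -> m = n) ->
  forall n s, NoDup (map g (seq s n)).
Proof.
  intros Hg. induction n; intros s; simpl; constructor; auto.
  intro Hin. apply in_map_iff in Hin as [y [Hy Hin]]. apply Hg in Hy. subst.
  apply in_seq in Hin. lia.
Qed.

Lemma inf_inj (g : nat -> point) : (forall m n, g m = g n -> m = n) -> forall l, exists n, ~ In (g n) l.
Proof.
  intros Hg l. destruct (classic (exists n, ~ In (g n) l)) as [H|H]; auto. exfalso.
  assert (H0 : forall n, In (g n) l) by (intro n; apply NNPP; intro; apply H; eauto).
  pose proof (@NoDup_incl_length _ _ l (nodup_map_inj g Hg (Datatypes.S (length l)) 0)) as H1.
  assert (incl (map g (seq 0 (Datatypes.S (length l)))) l).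
  { intros x Hx. apply in_map_iff in Hx as [y [<- _]]. auto. }
  specialize (H1 H2). rewrite length_map, length_seq in H1. lia.
Qed.

Definition Aset : point -> Prop := fun p => exists i j, (i < j)%nat /\ p = pt i j.
Definition pte (e : nat * nat) := pt (fst e) (snd e).

Lemma get_edges (P : list point) : (forall x, In x P -> Aset x) ->
  exists E, (forall e, In e E -> (fst e < snd e)%nat) /\ map pte E = P.
Proof.
  induction P as [|x P IH]; intros HA.
  - exists nil; split; simpl; tauto.
  - destruct IH as [E [HE1 HE2]]. { intros; apply HA; right; auto. }
    destruct (HA x (or_introl eq_refl)) as [i [j [Hij ->]]].
    exists ((i,j) :: E). split.
    + intros e [<-|He]; simpl; auto.
    + simpl. rewrite HE2. reflexivity.
Qed.

Lemma bound_E (E : list (nat*nat)) : exists N, forall e, In e E -> (snd e < N)%nat.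
Proof.
  induction E as [|e E [N HN]]. exists 0%nat; simpl; tauto.
  exists (max (Datatypes.S (snd e)) N). intros e' [<-|He]; [lia|]. specialize (HN e' He); lia.
Qed.

Lemma nodup_map_filter {X Y} (g: X->Y) f l : NoDup (map g l) -> NoDup (map g (filter f l)).
Proof.
  induction l; simpl; intros H; auto. inversion H; subst.
  destruct (f a); simpl; [constructor|]; auto.
  intro Hin; apply H2. apply in_map_iff in Hin as [y [Hy Hy2]]. apply filter_In in Hy2.
  rewrite <- Hy. apply in_map; tauto.
Qed.

Lemma cutb_cut side a b : cutb side (a,b) = true -> cut side a b.
Proof. unfold cutb, cut; simpl. destruct (side a), (side b); simpl; congruence. Qed.

Theorem theorem1p1 :
  exists A : point -> Prop,
    infinite_set A /\
    (forall (n : nat) (P : list point),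
        (1 <= n)%nat -> NoDup P -> length P = n -> (forall x, In x P -> A x) ->
        exists P' : list point,
          NoDup P' /\ (forall x, In x P' -> In x P) /\
          (n <= 2 * length P')%nat /\
          no_three_collinear (fun x => In x P')) /\
    ~ (exists (m : nat) (c : point -> nat),
          (forall x, A x -> (c x < m)%nat) /\
          forall i : nat, no_three_collinear (fun x => A x /\ c x = i)).
Proof.
  exists Aset. split; [|split].
  - intros l. destruct (inf_inj (fun n => pt 0 (Datatypes.S n))) with (l := l) as [n Hn].
    { intros m k H. apply pt_inj in H; lia. }
    exists (pt 0 (Datatypes.S n)). split; auto. exists 0%nat, (Datatypes.S n). split; [lia|reflexivity].
  - intros n P _ Hnd Hlen HA.
    destruct (get_edges P HA) as [E [HEv HEP]].
    destruct (bound_E E) as [N HN].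
    destruct (maxcut N E) as [side Hs]. { intros e He; split; auto. }
    exists (map pte (filter (cutb side) E)). split; [|split; [|split]].
    + apply nodup_map_filter. rewrite HEP; auto.
    + intros x Hx. apply in_map_iff in Hx as [e [<- He]]. apply filter_In in He.
      rewrite <- HEP. apply in_map; tauto.
    + rewrite length_map. rewrite <- Hlen, <- HEP, length_map. auto.
    + intros p q r Hp Hq Hr npq nqr npr.
      apply in_map_iff in Hp as [[a1 b1] [<- Hp]]. apply filter_In in Hp as [Hp1 Hp2].
      apply in_map_iff in Hq as [[a2 b2] [<- Hq]]. apply filter_In in Hq as [Hq1 Hq2].
      apply in_map_iff in Hr as [[a3 b3] [<- Hr]]. apply filter_In in Hr as [Hr1 Hr2].
      unfold pte; simpl.
      apply (noncoll side); try (apply (HEv _ Hp1)); try (apply (HEv _ Hq1)); try (apply (HEv _ Hr1));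
        try (apply cutb_cut; auto); intro E0; inversion E0; subst; auto.
  - intros [m [c [Hc Hcol]]].
    destruct (ramsey (fun i j => c (pt i j)) m (seq 0 m) ltac:(rewrite length_seq; lia) (fun _ => True))
      as [i [j [k [Hij [Hjk [E1 E2]]]]]].
    { intros k; exists k; split; auto. }
    { intros u w _ _ Huw. apply in_seq. split; [lia|]. simpl. apply Hc. exists u, w; auto. }
    apply (Hcol (c (pt i j)) (pt i j) (pt j k) (pt i k)).
    + split; auto. exists i, j; auto.
    + split; auto. exists j, k; auto.
    + split; auto. exists i, k; split; auto; lia.
    + intro H; apply pt_inj in H; lia.
    + intro H; apply pt_inj in H; lia.
    + intro H; apply pt_inj in H; lia.
    + apply tri_coll.
Qed.
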